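(* If $\sigma_A\alpha_i-\sigma_S\mu_S>0$ for every individual $i$, then the system is in the full action state: for every $t_{start}\ge 0$, every individual acts infinitely (countably) many times after $t_{start}$.
   Context: Model: Fix an integer $n\ge 2$ (number of individuals) and parameters $\sigma_A,\sigma_S\ge 0$, $\sigma_C>0$, $\mu_S\in[0,1]$, $\mu_C>0$, $r>0$, $\tau\in(0,1)$, $\alpha_1,\dots,\alpha_n\in(-1,1)$. Individual $i$ has state $(x_i(t),y_i(t))$, $x_i\in(-1,1)$, $y_i\in[0,1]$, and $\gamma_i(t)=\frac{1}{n-1}\sum_{j\neq i}y_j(t)$. Between action events the state evolves by $\dot x_i=[\sigma_A\alpha_i+\sigma_S(\gamma_i-\mu_S)]\,\sigma_C(\gamma_i+\mu_C)(1-x_i)(1+x_i)$, $\dot y_i=-ry_i$. Individual $i$ ''acts'' at a time $t$ when $x_i(t)$ reaches the threshold $\tau$ (i.e. $x_i(t)\ge\tau$); immediately afterwards $x_i$ is reset to $0$ and $y_i$ is reset to $1$, and the continuous evolution resumes from the new state. Initial data satisfy $x_j(0)<\tau$, $y_j(0)=0$. *)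

(* Defs.v *)
From Stdlib Require Import Reals List.
From Coquelicot Require Import Coquelicot.
Open Scope R_scope.

(* Individuals are indexed by i < n (i : nat).
   gamma_i(t) = 1/(n-1) * sum_{j <> i, j < n} y_j(t). *)
Definition gamma (n : nat) (y : nat -> R -> R) (i : nat) (t : R) : R :=
  / (INR n - 1) *
  sum_f_R0 (fun j => if Nat.eq_dec j i then 0 else y j t) (n - 1).

Definition xrate (n : nat) (sA sS sC muS muC : R) (alpha : nat -> R)
  (x y : nat -> R -> R) (i : nat) (t : R) : R :=
  (sA * alpha i + sS * (gamma n y i t - muS)) * sC * (gamma n y i t + muC)
  * (1 - x i t) * (1 + x i t).

(* A (hybrid) solution of the model on [0, +oo):
   x i, y i : the state of individual i; A i t : "individual i acts at time t".
   Between action events the ODE holds; x i stays strictly below the threshold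
   tau and is continuous except at its own action times, where its left limit
   is tau (the threshold is reached) and the state is reset to (0,1).
   Action times are locally finite (no Zeno behaviour). *)
Definition is_solution (n : nat) (sA sS sC muS muC r tau : R) (alpha : nat -> R)
  (x y : nat -> R -> R) (A : nat -> R -> Prop) : Prop :=
  (forall i, (i < n)%nat -> -1 < x i 0 < tau /\ y i 0 = 0) /\
  (forall i t, (i < n)%nat -> A i t -> 0 < t) /\
  (forall i T, (i < n)%nat ->
     exists l : list R, forall t, 0 <= t <= T -> A i t -> In t l) /\
  (* the threshold is never exceeded: acting happens exactly upon reaching it *)
  (forall i t, (i < n)%nat -> 0 <= t -> x i t < tau) /\
  (forall i t, (i < n)%nat -> 0 <= t ->
     filterlim (x i) (at_right t) (locally (x i t)) /\
     filterlim (y i) (at_right t) (locally (y i t))) /\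
  (forall i t, (i < n)%nat -> 0 < t -> ~ A i t ->
     continuous (x i) t /\ continuous (y i) t) /\
  (forall i t, (i < n)%nat -> A i t ->
     filterlim (x i) (at_left t) (locally tau) /\ x i t = 0 /\ y i t = 1) /\
  (forall t, 0 < t -> (forall j, (j < n)%nat -> ~ A j t) ->
     forall i, (i < n)%nat ->
       is_derive (x i) t (xrate n sA sS sC muS muC alpha x y i t) /\
       is_derive (y i) t (- r * y i t)).

(* Main.v *)
Require Import Defs.
From Stdlib Require Import Reals List Lra Lia Classical.
From Coquelicot Require Import Coquelicot.
Open Scope R_scope.

Lemma mvt_k (f : R -> R) a b k : a < b ->
  filterlim f (at_right a) (locally (f a)) ->
  (forall t, a < t <= b -> continuous f t) ->
  (forall t, a < t < b -> exists d, is_derive f t d /\ k <= d) ->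
  k * (b - a) <= f b - f a.
Proof.
  intros Hab Hr Hc Hd.
  set (h := fun t => f (Rmax a t)).
  set (df := fun t => if Rlt_dec a t then if Rlt_dec t b then Derive h t else k else k).
  assert (Hloc : forall x, a < x -> locally x (fun y => f y = h y)).
  { intros x Hx. assert (Hp : 0 < x - a) by lra.
    exists (mkposreal _ Hp). intros y Hy. unfold h.
    change (Rabs (y - x) < x - a) in Hy. apply Rabs_def2 in Hy.
    rewrite Rmax_right; lra. }
  assert (Hdh : forall x, a < x < b -> is_derive h x (df x) /\ k <= df x).
  { intros x Hx. destruct (Hd x Hx) as [d [Hd1 Hd2]].
    assert (Hh : is_derive h x d) by (apply (is_derive_ext_loc f); auto; apply Hloc; lra).
    unfold df. destruct (Rlt_dec a x); [|lra]. destruct (Rlt_dec x b); [|lra].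
    rewrite (is_derive_unique h x d Hh). auto. }
  destruct (MVT_gen h a b df) as [c [Hc1 Hc2]].
  - rewrite Rmin_left, Rmax_right by lra. intros x Hx. apply Hdh; auto.
  - rewrite Rmin_left, Rmax_right by lra. intros x Hx.
    destruct (Req_dec x a) as [->|Hne].
    + apply continuity_pt_filterlim. apply filterlim_locally. intros eps.
      pose proof (proj1 (filterlim_locally f (f a)) Hr eps) as He.
      unfold at_right, within in He. eapply filter_imp; [|exact He].
      intros t Ht. unfold h. rewrite Rmax_left by lra.
      destruct (Rlt_dec a t) as [Hat|Hat].
      * rewrite Rmax_right by lra. auto.
      * rewrite Rmax_left by lra. apply ball_center.
    + apply (continuity_pt_ext_loc f). apply Hloc; lra.
      apply continuity_pt_filterlim. apply Hc. lra.
  - unfold h in Hc2. rewrite Rmax_right in Hc2 by lra. rewrite Rmax_left in Hc2 by lra.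
    rewrite Rmin_left, Rmax_right in Hc1 by lra.
    assert (k <= df c).
    { unfold df. destruct (Rlt_dec a c); [|lra]. destruct (Rlt_dec c b); [|lra].
      destruct (Hdh c) as [_ H]; [lra|]. unfold df in H.
      destruct (Rlt_dec a c); [|lra]. destruct (Rlt_dec c b); [|lra]. auto. }
    rewrite Hc2. apply Rmult_le_compat_r; lra.
Qed.

Lemma rc_of_cont (f : R -> R) p : continuous f p -> filterlim f (at_right p) (locally (f p)).
Proof. intros H. eapply filterlim_filter_le_1; [apply filter_le_within|]. exact H. Qed.

Lemma mono_k_n (f : R -> R) k : forall N (L : list R) a b, (length L <= N)%nat -> a <= b ->
  filterlim f (at_right a) (locally (f a)) ->
  (forall t, a < t <= b -> continuous f t) ->
  (forall t, a < t < b -> ~ In t L -> exists d, is_derive f t d /\ k <= d) ->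
  k * (b - a) <= f b - f a.
Proof.
  induction N as [|N IH]; intros L a b HL Hab Hr Hc Hd.
  - destruct (Req_dec a b) as [->|Hne]; [lra|].
    apply mvt_k; auto; [lra|]. intros t Ht. apply Hd; auto.
    destruct L; simpl in *; [tauto|lia].
  - destruct (classic (exists p, In p L /\ a < p < b)) as [[p [Hp1 Hp2]]|Hno].
    + set (L' := remove Req_EM_T p L).
      assert (HL' : (length L' <= N)%nat).
      { pose proof (remove_length_lt Req_EM_T L p Hp1). unfold L'. lia. }
      assert (Hd' : forall a' b', a <= a' -> b' <= b -> (b' <= p \/ p <= a') -> forall t, a' < t < b' -> ~ In t L' ->
                 exists d, is_derive f t d /\ k <= d).
      { intros a' b' H1 H2 H3 t Ht Hn. apply Hd; [lra|]. intros Hin.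
        destruct (Req_dec t p) as [->|Hne].
        - destruct H3; lra.
        - apply Hn. apply in_in_remove; auto. }
      assert (H1 := IH L' a p HL' ltac:(lra) Hr ltac:(intros; apply Hc; lra)
                 (Hd' a p ltac:(lra) ltac:(lra) ltac:(lra))).
      assert (H2 := IH L' p b HL' ltac:(lra) (rc_of_cont f p (Hc p ltac:(lra)))
                 ltac:(intros; apply Hc; lra) (Hd' p b ltac:(lra) ltac:(lra) ltac:(lra))).
      lra.
    + destruct (Req_dec a b) as [->|Hne]; [lra|].
      apply mvt_k; auto; [lra|]. intros t Ht. apply Hd; auto.
      intros Hin. apply Hno. exists t; auto.
Qed.

Lemma mono_k (f : R -> R) k (L : list R) a b : a <= b ->
  filterlim f (at_right a) (locally (f a)) ->
  (forall t, a < t <= b -> continuous f t) ->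
  (forall t, a < t < b -> ~ In t L -> exists d, is_derive f t d /\ k <= d) ->
  k * (b - a) <= f b - f a.
Proof. apply (mono_k_n f k (length L) L). lia. Qed.

Lemma loc_ball (P : R -> Prop) c : locally c P -> exists d, 0 < d /\ forall y, Rabs (y - c) < d -> P y.
Proof. intros [e He]. exists e. split. apply cond_pos. intros y Hy. apply He. exact Hy. Qed.

Lemma barrier (f : R -> R) a b m lo (L : list R) : a <= b -> lo < m -> m <= f a ->
  filterlim f (at_right a) (locally (f a)) ->
  (forall t, a < t <= b -> continuous f t) ->
  (forall t, a < t < b -> ~ In t L -> lo < f t < m -> exists d, is_derive f t d /\ 0 <= d) ->
  m <= f b.
Proof.
  intros Hab Hlm Hma Hr Hc Hd.
  destruct (Rle_lt_dec m (f b)) as [|Hfb]; auto. exfalso.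
  set (E := fun u => a <= u <= b /\ m <= f u).
  destruct (completeness E) as [c [Hub Hlub]].
  { exists b. intros u [Hu _]. lra. }
  { exists a. split; lra. }
  assert (Hac : a <= c) by (apply Hub; split; lra).
  assert (Hcb : c <= b) by (apply Hlub; intros u [Hu _]; lra).
  assert (Hfc : m <= f c).
  { destruct (Req_dec c a) as [->|Hne]; auto.
    destruct (Rle_lt_dec m (f c)) as [|Hlt]; auto. exfalso.
    assert (He : 0 < m - f c) by lra.
    pose proof (proj1 (@filterlim_locally _ _ (locally c) _ f (f c)) (Hc c ltac:(lra)) (mkposreal _ He)) as H.
    apply loc_ball in H. destruct H as [d [Hd0 Hd1]].
    assert (c <= c - d / 2); [|lra].
    apply Hlub. intros u [Hu1 Hu2].
    destruct (Rle_lt_dec u (c - d/2)) as [|Hu]; auto. exfalso.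
    assert (u <= c) by (apply Hub; split; auto).
    assert (Hb := Hd1 u). 
    assert (Hb' : Rabs (f u - f c) < m - f c).
    { apply Hb. apply Rabs_def1; lra. }
    apply Rabs_def2 in Hb'. lra. }
  assert (Hcb' : c < b).
  { destruct (Req_dec c b) as [->|]; lra. }
  assert (Hrc : filterlim f (at_right c) (locally (f c))).
  { destruct (Req_dec c a) as [->|Hne]; auto. apply rc_of_cont. apply Hc. lra. }
  assert (He : 0 < f c - lo) by lra.
  pose proof (proj1 (@filterlim_locally _ _ (at_right c) _ f (f c)) Hrc (mkposreal _ He)) as H.
  unfold at_right, within in H.
  apply loc_ball in H. destruct H as [d [Hd0 Hd1]].
  set (t2 := Rmin (c + d / 2) b).
  assert (Ht2 : c < t2 <= b).
  { unfold t2. split. apply Rmin_glb_lt; lra. apply Rmin_r. }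
  assert (Ht2' : t2 <= c + d / 2) by apply Rmin_l.
  assert (Hnot : forall u, c < u <= b -> f u < m).
  { intros u Hu. destruct (Rle_lt_dec m (f u)) as [Hm|]; auto.
    assert (u <= c) by (apply Hub; split; [lra|auto]). lra. }
  assert (Hmono := mono_k f 0 L c t2 ltac:(lra) Hrc ltac:(intros; apply Hc; lra)).
  assert (0 * (t2 - c) <= f t2 - f c).
  { apply Hmono. intros t Ht Hn. apply Hd; [lra|auto|]. split.
    - assert (Hb : Rabs (f t - f c) < f c - lo).
      { apply (Hd1 t). apply Rabs_def1; lra. lra. }
      apply Rabs_def2 in Hb. lra.
    - apply Hnot. lra. }
  assert (f t2 < m) by (apply Hnot; lra). lra.
Qed.

Lemma list_bound (l : list R) : exists M, forall t, In t l -> t <= M.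
Proof.
  induction l as [|a l [M HM]]. exists 0. intros t [].
  exists (Rmax a M). intros t [->|H]. apply Rmax_l. eapply Rle_trans. apply HM; auto. apply Rmax_r.
Qed.

Lemma last_in (l : list R) : forall (P : R -> Prop), (forall t, P t -> In t l) ->
  (forall t, ~ P t) \/ exists m, P m /\ forall t, P t -> t <= m.
Proof.
  induction l as [|a l IH]; intros P HP.
  - left. intros t Ht. apply (HP t Ht).
  - destruct (IH (fun t => P t /\ t <> a)) as [Hn|[m [Hm1 Hm2]]].
    + intros t [Ht Hne]. destruct (HP t Ht); auto. congruence.
    + destruct (classic (P a)) as [Pa|nPa].
      * right. exists a. split; auto. intros t Ht.
        destruct (Req_dec t a); [lra|]. exfalso; apply (Hn t); auto.
      * left. intros t Ht. destruct (Req_dec t a) as [->|]; auto. apply (Hn t); auto.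
    + right. destruct (classic (P a)) as [Pa|nPa].
      * exists (Rmax a m). split.
        -- destruct (Rle_dec a m). rewrite Rmax_right by auto. apply Hm1. rewrite Rmax_left by lra. auto.
        -- intros t Ht. destruct (Req_dec t a) as [->|]. apply Rmax_l.
           eapply Rle_trans. apply Hm2; auto. apply Rmax_r.
      * exists m. split. apply Hm1. intros t Ht. apply Hm2. split; auto.
        intros ->; auto.
Qed.

Lemma all_list (n : nat) (A : nat -> R -> Prop) :
  (forall i T, (i < n)%nat -> exists l : list R, forall t, 0 <= t <= T -> A i t -> In t l) ->
  forall T, exists L, forall j t, (j < n)%nat -> 0 <= t <= T -> A j t -> In t L.
Proof.
  intros H T.
  assert (forall k, (k <= n)%nat -> exists L, forall j t, (j < k)%nat -> 0 <= t <= T -> A j t -> In t L).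
  { induction k as [|k IH]; intros Hk.
    - exists nil. intros; lia.
    - destruct (IH ltac:(lia)) as [L HL]. destruct (H k T ltac:(lia)) as [l Hl].
      exists (L ++ l). intros j t Hj Ht Ha. apply in_or_app.
      destruct (Nat.eq_dec j k) as [->|]. right; auto. left. apply (HL j); auto; lia. }
  apply H0. lia.
Qed.

Lemma sum_nonneg (An : nat -> R) N : (forall j, (j <= N)%nat -> 0 <= An j) -> 0 <= sum_f_R0 An N.
Proof.
  induction N; intros H; simpl. apply H; lia.
  apply Rplus_le_le_0_compat. apply IHN; intros; apply H; lia. apply H; lia.
Qed.

Theorem proposition5
  (n : nat) (Hn : (2 <= n)%nat)
  (sA sS sC muS muC r tau : R) (alpha : nat -> R)
  (HsA : 0 <= sA) (HsS : 0 <= sS) (HsC : 0 < sC)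
  (HmuS : 0 <= muS <= 1) (HmuC : 0 < muC) (Hr : 0 < r) (Htau : 0 < tau < 1)
  (Halpha : forall i, (i < n)%nat -> -1 < alpha i < 1)
  (x y : nat -> R -> R) (A : nat -> R -> Prop)
  (Hsol : is_solution n sA sS sC muS muC r tau alpha x y A)
  (Hpos : forall i, (i < n)%nat -> sA * alpha i - sS * muS > 0) :
  forall tstart, 0 <= tstart ->
  forall i, (i < n)%nat ->
    ~ (exists l : list R, forall t, tstart < t -> A i t -> In t l).
Proof.
  destruct Hsol as [H0 [Hapos [Hfin [Hlt [Hrc [Hcont [Hact Hode]]]]]]].
  assert (Hlast : forall j B, (j < n)%nat -> 0 <= B -> exists s, 0 <= s <= B /\
            (s = 0 \/ A j s) /\ forall t, s < t <= B -> ~ A j t).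
  { intros j B Hj HB. destruct (Hfin j B Hj) as [l Hl].
    destruct (last_in l (fun t => 0 <= t <= B /\ A j t)) as [Hno|[m [[Hm1 Hm2] Hm3]]].
    - intros t [Ht1 Ht2]. auto.
    - exists 0. split. lra. split. auto. intros t Ht Ha. apply (Hno t). split; auto; lra.
    - exists m. split; auto. split; auto. intros t Ht Ha.
      assert (t <= m) by (apply Hm3; split; auto; lra). lra. }
  assert (Hy : forall j t, (j < n)%nat -> 0 <= t -> 0 <= y j t).
  { intros j t Hj Ht. destruct (Hlast j t Hj Ht) as [s [Hs1 [Hs2 Hs3]]].
    destruct (all_list n A Hfin t) as [L HL].
    apply (barrier (y j) s t 0 (-1) L); try lra.
    - destruct Hs2 as [->|Ha]. rewrite (proj2 (H0 j Hj)); lra.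
      rewrite (proj2 (proj2 (Hact j s Hj Ha))); lra.
    - apply (Hrc j s Hj). lra.
    - intros u Hu. apply (Hcont j u Hj). lra. apply Hs3; lra.
    - intros u Hu Hn' Hyu. exists (- r * y j u). split.
      + apply (Hode u ltac:(lra)); auto.
        intros k Hk Ha. apply Hn'. apply (HL k); auto; lra.
      + nra. }
  assert (Hg : forall k t, (k < n)%nat -> 0 <= t -> 0 <= gamma n y k t).
  { intros k t Hk Ht. unfold gamma. apply Rmult_le_pos.
    - apply Rlt_le, Rinv_0_lt_compat. apply le_INR in Hn. simpl in Hn. lra.
    - apply sum_nonneg. intros j Hj. destruct (Nat.eq_dec j k). lra. apply Hy; auto; lia. }
  intros tstart Hts i Hi [l Hl].
  destruct (list_bound l) as [M HM].
  set (B := Rmax tstart M + 1).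
  assert (HB : forall t, B < t -> ~ A i t).
  { intros t Ht Ha. assert (t <= M) by (apply HM, Hl; auto; unfold B in Ht;
      pose proof (Rmax_l tstart M); lra).
    unfold B in Ht; pose proof (Rmax_r tstart M); lra. }
  destruct (Hlast i B Hi ltac:(unfold B; pose proof (Rmax_l tstart M); lra)) as [s [Hs1 [Hs2 Hs3]]].
  assert (Hno : forall t, s < t -> ~ A i t).
  { intros t Ht. destruct (Rle_lt_dec t B). apply Hs3; lra. apply HB; auto. }
  set (x0 := x i s).
  assert (Hx0 : -1 < x0 < tau).
  { unfold x0. destruct Hs2 as [->|Ha]. apply H0; auto.
    rewrite (proj1 (proj2 (Hact i s Hi Ha))). lra. }
  set (a0 := sA * alpha i - sS * muS). assert (Ha0 := Hpos i Hi). fold a0 in Ha0.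
  assert (Hrate : forall t, 0 < t -> -1 < x i t < 1 ->
     (a0 * sC * muC) * ((1 - x i t) * (1 + x i t)) <= xrate n sA sS sC muS muC alpha x y i t).
  { intros t Ht Hxt. unfold xrate. assert (Hgt := Hg i t Hi ltac:(lra)).
    set (g := gamma n y i t) in *. set (z := x i t) in *.
    assert (Hp : 0 <= (1 - z) * (1 + z)) by nra.
    assert (Hq : a0 * sC * muC <= (sA * alpha i + sS * (g - muS)) * sC * (g + muC)).
    { assert (HP : a0 <= sA * alpha i + sS * (g - muS)) by (unfold a0; nra).
      set (P := sA * alpha i + sS * (g - muS)) in *.
      assert (0 <= (P - a0) * sC * (g + muC)) by (apply Rmult_le_pos; [apply Rmult_le_pos|]; lra).
      assert (0 <= a0 * sC * g) by (apply Rmult_le_pos; [apply Rmult_le_pos|]; lra).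
      nra. }
    replace ((sA * alpha i + sS * (g - muS)) * sC * (g + muC) * (1 - z) * (1 + z))
      with (((sA * alpha i + sS * (g - muS)) * sC * (g + muC)) * ((1 - z) * (1 + z))) by ring.
    apply Rmult_le_compat_r; auto. }
  assert (Hc0 : 0 < a0 * sC * muC) by (apply Rmult_lt_0_compat; [apply Rmult_lt_0_compat|]; lra).
  assert (Hxlow : forall t, s <= t -> x0 <= x i t).
  { intros t Ht. destruct (all_list n A Hfin t) as [L HL].
    apply (barrier (x i) s t x0 (-1) L); try lra.
    - unfold x0; lra.
    - apply (Hrc i s Hi). lra.
    - intros u Hu. apply (Hcont i u Hi). lra. apply Hno; lra.
    - intros u Hu Hn' Hxu. exists (xrate n sA sS sC muS muC alpha x y i u). split.
      + apply (Hode u ltac:(lra)); auto.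
        intros k Hk Ha. apply Hn'. apply (HL k); auto; lra.
      + eapply Rle_trans; [|apply Hrate; lra].
        apply Rmult_le_pos. lra. nra. }
  set (k := a0 * sC * muC * ((1 - tau) * (1 + x0))).
  assert (Hk : 0 < k) by (unfold k; apply Rmult_lt_0_compat; [lra|]; nra).
  set (T1 := s + (tau - x0) / k + 1).
  assert (HT1 : (tau - x0) / k > 0) by (apply Rdiv_lt_0_compat; lra).
  destruct (all_list n A Hfin T1) as [L HL].
  assert (Hm := mono_k (x i) k L s T1 ltac:(unfold T1; lra) (proj1 (Hrc i s Hi ltac:(lra)))).
  assert (k * (T1 - s) <= x i T1 - x i s).
  { apply Hm.
    - intros u Hu. apply (Hcont i u Hi). lra. apply Hno; lra.
    - intros u Hu Hn'. exists (xrate n sA sS sC muS muC alpha x y i u). split.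
      + apply (Hode u ltac:(lra)); auto.
        intros j Hj Ha. apply Hn'. apply (HL j); auto; lra.
      + assert (Hxu := Hxlow u ltac:(lra)). assert (Hxt := Hlt i u Hi ltac:(lra)).
        eapply Rle_trans; [|apply Hrate; lra]. unfold k.
        apply Rmult_le_compat_l. lra.
        apply Rmult_le_compat; nra. }
  assert (Hx1 := Hlt i T1 Hi ltac:(unfold T1; lra)).
  assert (k * (T1 - s) = (tau - x0) + k) by (unfold T1; field; lra).
  fold x0 in H. lra.
Qed.
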